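(* Let $G$ be a finite abelian $p$-group ($p$ any prime). Then the lattice $\mathrm{Char}(G)$ of characteristic subgroups of $G$ is directly indecomposable, i.e. it is not isomorphic to a direct product of two nontrivial lattices.
   Context: A lattice is nontrivial if it has more than one element. *)

(* Defs.v *)
From HB Require Import structures.
From mathcomp Require Import all_boot all_order all_fingroup all_solvable.
Set Implicit Arguments. Unset Strict Implicit. Unset Printing Implicit Defensive.
Import Order.TTheory.
Local Open Scope group_scope.

(* Char(G) is directly decomposable iff there are nontrivial lattices L1, L2
   and a bijection Char(G) -> L1 * L2 (given componentwise by f1, f2) that is a
   lattice homomorphism into the product lattice (meet/join componentwise). *)
Definition char_lattice_decomposable (gT : finGroupType) (G : {group gT}) : Prop :=
  exists (d1 d2 : Order.disp_t) (L1 : latticeType d1) (L2 : latticeType d2)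
         (f1 : {group gT} -> L1) (f2 : {group gT} -> L2),
    [/\ (exists x y : L1, x != y),
        (exists x y : L2, x != y),
        (forall H K : {group gT}, H \char G -> K \char G ->
            f1 H = f1 K -> f2 H = f2 K -> H = K),
        (forall (a : L1) (b : L2), exists H : {group gT},
            [/\ H \char G, f1 H = a & f2 H = b]) &
        (forall H K : {group gT}, H \char G -> K \char G ->
           [/\ f1 (H :&: K)%G = Order.meet (f1 H) (f1 K),
               f2 (H :&: K)%G = Order.meet (f2 H) (f2 K),
               f1 (H <*> K)%G = Order.join (f1 H) (f1 K) &
               f2 (H <*> K)%G = Order.join (f2 H) (f2 K)])].

(* Main.v *)
Require Import Defs.
From HB Require Import structures.
From mathcomp Require Import all_boot all_order all_fingroup all_solvable.
Set Implicit Arguments. Unset Strict Implicit. Unset Printing Implicit Defensive.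
Local Open Scope group_scope.
Lemma core (gT : finGroupType) (G E F : {group gT}) :
  abelian G -> E \char G -> F \char G -> E :&: F = 1 -> E <*> F = G ->
  F :!=: 1 -> exponent E = exponent G -> False.
Proof.
move=> cGG chE chF tiEF defG ntF expE.
have sEG := char_sub chE; have sFG := char_sub chF.
have cEE : abelian E := abelianS sEG cGG.
have [e Ee oe] := exponent_witness (abelian_nil cEE).
have Ge : e \in G := subsetP sEG e Ee.
have /splitsP[K0 /complP[tiK0 defE]] := abelian_splits Ee (esym oe) cEE.
have sK0E : K0 \subset E by rewrite -defE mulG_subr.
have dE : <[e]> \x K0 = E.
  by rewrite dprodE // (sub_abelian_cent2 cEE) // cycle_subG.
have dG : E \x F = G.
  by rewrite dprodEY // (sub_abelian_cent2 cGG).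
have tiK0F : K0 :&: F = 1.
  by apply/trivgP; rewrite -tiEF setSI.
have dK : K0 \x F = K0 <*> F.
  by rewrite dprodEY // (sub_abelian_cent2 cGG) // (subset_trans sK0E).
set K := (K0 <*> F)%G.
have dG2 : <[e]> \x K = G by rewrite /= -dK dprodA dE.
have [y Fy nty] : exists2 y, y \in F & y != 1.
  by case/trivgPn: ntF => y; exists y.
have Gy : y \in G := subsetP sFG y Fy.
have Ky : y \in K by rewrite /= mem_gen // inE Fy orbT.
have dvd_ey : #[e * y] %| #[e].
  rewrite order_dvdn expgMn; last by apply: (centsP cGG).
  by rewrite -oe expE !expg_exponent // mulg1.
have em : eltm_morphism dvd_ey e = e * y by exact: eltm_id.
have cfHK : (idm K) @* K \subset 'C((eltm dvd_ey) @* <[e]>).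
  rewrite im_idm morphim_cycle ?cycle_id //.
rewrite em.
  apply: (sub_abelian_cent2 cGG); first by rewrite -(dprodWY dG2) joing_subr.
  by rewrite cycle_subG groupM.
set f := dprodm dG2 cfHK.
have fe : f e = e * y by rewrite /f dprodmEl ?cycle_id // em.
have imf : f @* G = G.
  apply/eqP; rewrite eqEsubset; apply/andP; split.
    rewrite im_dprodm im_idm morphim_cycle ?cycle_id // em.
    by rewrite mul_subG ?cycle_subG ?groupM // -(dprodWY dG2) joing_subr.
  rewrite -{1}(dprodW dG2) mul_subG //.
    have fy : f y = y by rewrite /f dprodmEr.
    have h1 : f e \in f @* G by apply: mem_morphim.
    rewrite fe in h1.
    have h2 : f y \in f @* G by apply: mem_morphim.
    rewrite fy in h2.
    have h3 : e * y * y^-1 \in f @* G by rewrite groupM ?groupV.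
    by rewrite mulgK in h3; rewrite cycle_subG.
  by rewrite /= /f im_dprodm im_idm mulG_subr.
have injf : 'injm f by rewrite -card_im_injm imf.
have [_ /(_ f injf imf) fE] := charP _ _ chE.
have h : f e \in f @* E by apply: mem_morphim.
rewrite fE fe groupMl // in h.
have : y \in E :&: F by rewrite inE h Fy.
by rewrite tiEF => /set1P/eqP; apply/negP.
Qed.

Lemma core2 (p : nat) (gT : finGroupType) (G E F : {group gT}) :
  p.-group G -> abelian G -> E \char G -> F \char G -> E :&: F = 1 -> E <*> F = G ->
  E :!=: 1 -> F :!=: 1 -> False.
Proof.
move=> pG cGG chE chF tiEF defG ntE ntF.
have sEG := char_sub chE; have sFG := char_sub chF.
have dG : E \x F = G by rewrite dprodEY // (sub_abelian_cent2 cGG).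
have hl := dprod_exponent dG.
have pe : p.-nat (exponent G) by rewrite pnat_exponent.
have [a ea] := p_natP (pnat_dvd (exponentS sEG) pe).
have [b eb] := p_natP (pnat_dvd (exponentS sFG) pe).
case: (leqP b a) => hab.
  apply: (core cGG chE chF tiEF defG ntF).
  by rewrite -hl ea eb; apply/esym/lcmn_idPl; rewrite dvdn_exp2l.
apply: (core cGG chF chE _ _ ntE).
- by rewrite setIC.
- by rewrite joingC.
by rewrite -hl ea eb; apply/esym/lcmn_idPr; rewrite dvdn_exp2l // ltnW.
Qed.

Theorem mainTheorem14 (p : nat) (gT : finGroupType) (G : {group gT}) :
  prime p -> p.-group G -> abelian G -> ~ char_lattice_decomposable G.
Proof.
move=> _ pG cGG [d1 [d2 [L1 [L2 [f1 [f2 [[x1 [y1 n1]] [x2 [y2 n2]] inj surj hom]]]]]]].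
have ch1 : (1%G : {group gT}) \char G := char1 G.
have chG : G \char G := char_refl G.
have eI1 : forall H : {group gT}, (H :&: 1)%G = 1%G.
  by move=> H; apply/val_inj; rewrite /= setIg1.
have e1I : forall H : {group gT}, (1 :&: H)%G = 1%G.
  by move=> H; apply/val_inj; rewrite /= setI1g.
have eY1 : forall H : {group gT}, (H <*> 1)%G = H.
  by move=> H; apply/val_inj; rewrite /= joingG1.
have e1Y : forall H : {group gT}, (1 <*> H)%G = H.
  by move=> H; apply/val_inj; rewrite /= joing1G.
have eIG : forall H : {group gT}, H \char G -> (H :&: G)%G = H.
  by move=> H /char_sub sHG; apply/val_inj; rewrite /= (setIidPl sHG).
have nt1 : f1 G <> f1 1%G.
  move=> e; apply/negP: n1; apply/negPn/eqP.
  suff all1 : forall a : L1, a = f1 1%G by rewrite (all1 x1) (all1 y1).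
  move=> a; have [H [chH <- _]] := surj a (f2 1%G).
  have [h1 _ _ _] := hom H G chH chG.
  have [h2 _ _ _] := hom H 1%G chH ch1.
  by rewrite -{1}(eIG H chH) h1 e -h2 eI1.
have nt2 : f2 G <> f2 1%G.
  move=> e; apply/negP: n2; apply/negPn/eqP.
  suff all1 : forall a : L2, a = f2 1%G by rewrite (all1 x2) (all1 y2).
  move=> a; have [H [chH _ <-]] := surj (f1 1%G) a.
  have [_ h1 _ _] := hom H G chH chG.
  have [_ h2 _ _] := hom H 1%G chH ch1.
  by rewrite -{1}(eIG H chH) h1 e -h2 eI1.
have [E [chE E1 E2]] := surj (f1 G) (f2 1%G).
have [F [chF F1 F2]] := surj (f1 1%G) (f2 G).
have [a1 a2 a3 a4] := hom E F chE chF.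
have [b1 b2 _ _] := hom G 1%G chG ch1.
have [c1 c2 _ _] := hom 1%G G ch1 chG.
have [_ _ b3 b4] := hom G 1%G chG ch1.
have [_ _ c3 c4] := hom 1%G G ch1 chG.
apply: (core2 pG cGG chE chF).
- have := inj _ _ (charI chE chF) ch1.
  rewrite a1 a2 E1 E2 F1 F2 -b1 -c2 eI1 e1I => /(_ erefl erefl) h.
  by rewrite -[E :&: F]/(gval (E :&: F)%G) h.
- have := inj _ _ (charY chE chF) chG.
  rewrite a3 a4 E1 E2 F1 F2 -b3 -c4 eY1 e1Y => /(_ erefl erefl) h.
  by rewrite -[E <*> F]/(gval (E <*> F)%G) h.
- apply/eqP => e; apply: nt1; rewrite -E1.
  by congr f1; apply/val_inj.
- apply/eqP => e; apply: nt2; rewrite -F2.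
  by congr f2; apply/val_inj.
Qed.
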